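(* The coarse transition function $\Phi:\mathrm{Conf}\to\mathrm{Conf}$ is the left Kan extension of the fully shifted local transition function $\overline{\delta}:\mathrm{Loc}\to\mathrm{Conf}$ along the projection $\pi_2:\mathrm{Loc}\to\mathrm{Conf}$. That is, $\Phi$ is monotonic, $\overline{\delta}\Rightarrow\Phi\circ\pi_2$, and for every monotonic $F:\mathrm{Conf}\to\mathrm{Conf}$ with $\overline{\delta}\Rightarrow F\circ\pi_2$ we have $\Phi\Rightarrow F$.
   Context: A cellular automaton is given by a group $G$, a neighborhood $N\subseteq G$ (not necessarily finite), a finite set of states $Q$ and a local transition function $\delta:Q^N\to Q$. $\mathrm{Conf}$ is the set of partial functions $G\to Q$; $|c|$ is the domain (support) of $c$; $c\restriction S$ is the restriction of $c$ to $S\cap|c|$. $\mathrm{Conf}$ is partially ordered by $c\preceq c'$ iff for all $g\in|c|$, $g\in|c'|$ and $c(g)=c'(g)$. For $c\in\mathrm{Conf}$, $g\in G$, $c\blacktriangleleft g$ has support $\{h\in G\mid g\cdot h\in|c|\}$ and $(c\blacktriangleleft g)(h)=c(g\cdot h)$. $g\cdot N=\{g\cdot n\mid n\in N\}$, and $\mathrm{int}(S)=\{g\in G\mid g\cdot N\subseteq S\}$. The coarse transition function $\Phi$ maps $c$ to the configuration with support $\mathrm{int}(|c|)$ and values $\Phi(c)(g)=\delta((c\blacktriangleleft g)\restriction N)$. $\mathrm{Loc}=\bigcup_{g\in G}(\{g\}\times Q^{g\cdot N})$ is the poset with trivial order ($(g,c)\preceq(g',c')$ iff $(g,c)=(g',c')$);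 $\overline{\delta}(g,c)$ is the configuration with support $\{g\}$ and value $\delta(c\blacktriangleleft g)$ at $g$; $\pi_2(g,c)=c$. For posets $X,Y$, a map $f:X\to Y$ is monotonic if $x\preceq x'$ implies $f(x)\preceq f(x')$; for monotonic $f,f':X\to Y$, $f\Rightarrow f'$ iff $f(x)\preceq f'(x)$ for all $x\in X$. Given posets $A,B,C$ and monotonic $i:A\to B$, $f:A\to C$, a monotonic $g:B\to C$ is the left Kan extension of $f$ along $i$ if it is the $\Rightarrow$-minimum of $\{h:B\to C \text{ monotonic}\mid f\Rightarrow h\circ i\}$, and the right Kan extension if it is the $\Rightarrow$-maximum of $\{h:B\to C\text{ monotonic}\mid h\circ i\Rightarrow f\}$. *)

(* Defs.v *)
From Stdlib Require Import ClassicalEpsilon.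
From Stdlib Require Export FinFun.

Set Implicit Arguments.


Definition monotone {X Y : Type} (leX : X -> X -> Prop) (leY : Y -> Y -> Prop)
  (f : X -> Y) : Prop := forall x x', leX x x' -> leY (f x) (f x').

Definition nat_le {X Y : Type} (leY : Y -> Y -> Prop) (f f' : X -> Y) : Prop :=
  forall x, leY (f x) (f' x).

Definition is_left_Kan {A B C : Type} (leB : B -> B -> Prop) (leC : C -> C -> Prop)
  (i : A -> B) (f : A -> C) (g : B -> C) : Prop :=
  (monotone leB leC g /\ nat_le leC f (fun a => g (i a))) /\
  (forall h : B -> C, monotone leB leC h -> nat_le leC f (fun a => h (i a)) ->
     nat_le leC g h).

(* partial functions G -> Q; support = { g | c g <> None } *)
Definition Conf (G Q : Type) := G -> option Q.

Definition conf_le {G Q : Type} (c c' : Conf G Q) : Prop :=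
  forall g q, c g = Some q -> c' g = Some q.

Definition oget_ne {Q : Type} (o : option Q) : o <> None -> Q :=
  match o return o <> None -> Q with
  | Some q => fun _ => q
  | None => fun H => False_rect Q (H eq_refl)
  end.

Arguments oget_ne {Q} o _.

Section CA.
Variables (G Q : Type) (mul : G -> G -> G) (N : G -> Prop)
          (delta : ({n : G | N n} -> Q) -> Q).

(* value at g of the local rule applied to c: defined iff g.N is contained
   in the support of c (i.e. g in int |c|), and then equal to
   delta ((c <| g) restricted to N). *)
Definition local_value (c : Conf G Q) (g : G) : option Q :=
  match excluded_middle_informative (forall n, N n -> c (mul g n) <> None) with
  | left H => Some (delta (fun n => oget_ne (c (mul g (proj1_sig n)))
                                            (H (proj1_sig n) (proj2_sig n))))
  | right _ => None
  end.

Definition Phi (c : Conf G Q) : Conf G Q := fun g => local_value c g.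

(* Loc: pairs (g, c) with c in Q^{g.N}, encoded as a partial configuration
   whose support is exactly g.N *)
Definition Loc : Type :=
  { p : G * Conf G Q |
    forall x, (snd p) x <> None <-> exists n, N n /\ x = mul (fst p) n }.

Definition loc_le (x y : Loc) : Prop := x = y.

Definition pi2 (x : Loc) : Conf G Q := snd (proj1_sig x).

Definition delta_bar (x : Loc) : Conf G Q :=
  fun h => match excluded_middle_informative (h = fst (proj1_sig x)) with
           | left _ => local_value (snd (proj1_sig x)) (fst (proj1_sig x))
           | right _ => None
           end.

End CA.

Arguments Phi {G Q} mul {N} delta c g.
Arguments Loc G Q mul N : clear implicits.
Arguments pi2 {G Q mul N} x g.
Arguments delta_bar {G Q} mul {N} delta x h.

(* Main.v *)
Require Import Defs.
From Stdlib Require Import FunctionalExtensionality ClassicalEpsilon.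

Lemma lv_ext (G Q : Type) (mul : G -> G -> G) (N : G -> Prop)
  (delta : ({n : G | N n} -> Q) -> Q) (c c' : Conf G Q) (g : G) :
  (forall n, N n -> c (mul g n) = c' (mul g n)) ->
  local_value mul N delta c g = local_value mul N delta c' g.
Proof.
  intros E. unfold local_value.
  destruct (excluded_middle_informative (forall n, N n -> c (mul g n) <> None)) as [H1|H1];
  destruct (excluded_middle_informative (forall n, N n -> c' (mul g n) <> None)) as [H2|H2].
  - f_equal; f_equal. apply functional_extensionality. intros [n Hn]; simpl.
    generalize (H1 n Hn) (H2 n Hn). rewrite (E n Hn).
    destruct (c' (mul g n)); intros a b; [reflexivity | exfalso; now apply a].
  - exfalso; apply H2; intros n Hn; rewrite <- (E n Hn); auto.
  - exfalso; apply H1; intros n Hn; rewrite (E n Hn); auto.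
  - reflexivity.
Qed.

Lemma lv_some (G Q : Type) (mul : G -> G -> G) (N : G -> Prop)
  (delta : ({n : G | N n} -> Q) -> Q) (c : Conf G Q) (g : G) q :
  local_value mul N delta c g = Some q -> forall n, N n -> c (mul g n) <> None.
Proof.
  unfold local_value.
  destruct (excluded_middle_informative (forall n, N n -> c (mul g n) <> None)); [intros _; assumption | discriminate].
Qed.

Theorem mainTheorem9
  (G : Type) (mul : G -> G -> G) (one : G) (inv : G -> G)
  (mulA : forall x y z, mul x (mul y z) = mul (mul x y) z)
  (mul1g : forall x, mul one x = x)
  (mulVg : forall x, mul (inv x) x = one)
  (N : G -> Prop)
  (Q : Type) (Qfin : Finite Q)
  (delta : ({n : G | N n} -> Q) -> Q) :
  is_left_Kan (@conf_le G Q) (@conf_le G Q)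
    (@pi2 G Q mul N) (delta_bar mul delta) (Phi mul delta).
Proof.
  split; [split|].
  - intros c c' Hc g q Hq. unfold Phi in *.
    rewrite <- Hq. symmetry. apply lv_ext. intros n Hn.
    pose proof (@lv_some _ _ _ _ _ _ _ _ Hq n Hn) as Hne.
    destruct (c (mul g n)) eqn:E; [|congruence]. symmetry. now apply Hc.
  - intros x h q. unfold delta_bar, Phi, pi2.
    destruct (excluded_middle_informative (h = fst (proj1_sig x))) as [->|]; congruence.
  - intros F HF HK c g q Hq. unfold Phi in Hq.
    pose (c' := fun y => match excluded_middle_informative (exists n, N n /\ y = mul g n) with
                         | left _ => c y | right _ => None end).
    assert (Hloc : forall y, c' y <> None <-> exists n, N n /\ y = mul g n).
    { intros y; unfold c'.
      destruct (excluded_middle_informative (exists n, N n /\ y = mul g n)) as [e|e].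
      - split; auto. intros _ . destruct e as [n [Hn ->]].
        exact (@lv_some _ _ _ _ _ _ _ _ Hq n Hn).
      - split; [congruence| tauto]. }
    pose (x := exist _ (g, c') Hloc : Loc G Q mul N).
    assert (Hle : conf_le c' c).
    { intros y r; unfold c'; destruct (excluded_middle_informative _); congruence. }
    apply (HF c' c Hle).
    apply (HK x g q). unfold delta_bar; simpl.
    destruct (excluded_middle_informative (g = g)) as [_|]; [|congruence].
    rewrite <- Hq. apply lv_ext. intros n Hn. unfold c'.
    destruct (excluded_middle_informative _) as [|ne]; [reflexivity|].
    exfalso; apply ne; eauto.
Qed.
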